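(* Let $P_1,P_2$ be probability measures on $(\Omega,\mathcal A)$ and $\delta\in(\tfrac12,1)$. If $\bar T(P_1,\delta)=\bar T(P_2,\delta)$, then $P_1=P_2$.
   Context: Let $(\Omega,\mathcal A)$ be a measurable space. For $n\ge1$, $\mathcal A^n$ is the product $\sigma$-algebra on $\Omega^n$; the extended event space is $\bar{\mathcal A}=\bigcup_{n\ge1}\mathcal A^n$, events tagged by their level $n$. For a probability measure $P$ on $\mathcal A$, $P^n$ is its $n$-fold product, $\bar P(A^{(n)})=P^n(A^{(n)})$ for $A^{(n)}\in\mathcal A^n$, and $\bar T(P,\delta)=\{A\in\bar{\mathcal A}:\bar P(A)\ge\delta\}$. *)

(* Defs.v *)
From HB Require Import structures.
From mathcomp Require Import all_boot all_order all_algebra.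
From mathcomp Require Import all_classical all_reals all_analysis.
Set Implicit Arguments. Unset Strict Implicit. Unset Printing Implicit Defensive.
Import Order.TTheory GRing.Theory Num.Theory.
Import numFieldNormedType.Exports.
Local Open Scope classical_set_scope.
Local Open Scope ring_scope.

(* Omega^n is represented by n.-tuple T, which MathComp-Analysis equips with
   the product sigma-algebra (generated by the coordinate projections). *)

Section extended.
Context d (T : measurableType d) (R : realType).

(* The n-fold product measure P^n, defined as the iterated (Tonelli)
   integral:  P^0 = Dirac at the empty tuple,
   P^(n+1)(A) = \int_x P^n {t | (x :: t) \in A} dP(x). *)
Fixpoint pow_measure (P : set T -> \bar R) (n : nat)
  : set (n.-tuple T) -> \bar R :=
  match n return set (n.-tuple T) -> \bar R with
  | 0 => fun A => if `[< A [tuple] >] then 1%E else 0%E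
  | n'.+1 => fun A =>
      (\int[P]_x @pow_measure P n' [set t : n'.-tuple T | A [tuple of x :: t]])%E
  end.

Definition ext_event := {n : nat & set (n.-tuple T)}.

Definition ext_measurable (A : ext_event) : Prop :=
  (0 < projT1 A)%N /\ measurable (projT2 A).

Definition Pbar (P : set T -> \bar R) (A : ext_event) : \bar R :=
  pow_measure P (projT2 A).

Definition Tbar (P : set T -> \bar R) (delta : R) : set ext_event :=
  [set A | ext_measurable A /\ (delta%:E <= Pbar P A)%E].

End extended.

(* Main.v *)
Require Import Defs.
From HB Require Import structures.
From mathcomp Require Import all_boot all_order all_algebra.
From mathcomp Require Import all_classical all_reals all_analysis.
From mathcomp Require Import ring lra measurable_realfun.
Import Order.TTheory GRing.Theory Num.Theory.
Local Open Scope ring_scope.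
Section RealPart.
Variable R : realType.
Implicit Types (p : R) (h : seq bool -> R).

Fixpoint Ex (p : R) (n : nat) (h : seq bool -> R) : R :=
  match n with
  | 0 => h [::]
  | n'.+1 => p * Ex p n' (fun s => h (true :: s)) + (1 - p) * Ex p n' (fun s => h (false :: s))
  end.

Definition cnt (s : seq bool) : R := (count id s)%:R.
Definition ind (f : seq bool -> bool) (s : seq bool) : R := if f s then 1 else 0.

Lemma Ex_le p n h h' : 0 <= p <= 1 -> (forall s, h s <= h' s) -> Ex p n h <= Ex p n h'.
Proof.
move=> /andP[p0 p1]; elim: n h h' => [|n IH] h h' hh //=.
apply: lerD; apply: ler_wpM2l; rewrite ?subr_ge0 //; exact: IH.
Qed.

Lemma Ex_scale p n h a : Ex p n (fun s => a * h s) = a * Ex p n h.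
Proof.
elim: n h => [|n IH] h //=.
rewrite (IH (fun s => h (true :: s))) (IH (fun s => h (false :: s))); ring.
Qed.

Lemma Ex_add p n h h' : Ex p n (fun s => h s + h' s) = Ex p n h + Ex p n h'.
Proof.
elim: n h h' => [|n IH] h h' //=.
rewrite (IH (fun s => h (true :: s))) (IH (fun s => h (false :: s))); ring.
Qed.

Lemma Ex_cst p n a : Ex p n (fun _ => a) = a.
Proof. elim: n => [|n IH] //=; rewrite IH; ring. Qed.

Lemma Ex_sq p n : forall c, Ex p n (fun s => (c + cnt s) ^+ 2) = (c + n%:R * p) ^+ 2 + n%:R * p * (1 - p).
Proof.
elim: n => [|n IH] c /=; first by rewrite /cnt /= !mul0r !addr0.
have -> : (fun s => (c + cnt (true :: s)) ^+ 2) = (fun s => ((c + 1) + cnt s) ^+ 2).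
  by apply: funext => s; rewrite /cnt /= natrD addrA.
have -> : (fun s => (c + cnt (false :: s)) ^+ 2) = (fun s => (c + cnt s) ^+ 2).
  by apply: funext => s; rewrite /cnt /= add0n.
rewrite !IH -[n.+1]addn1 natrD; ring.
Qed.

Lemma tail_bound p n (g : R) (f : seq bool -> bool) : 0 <= p <= 1 -> (0 < n)%N -> 0 < g ->
  (forall s, f s -> (n%:R * g) ^+ 2 <= (- (n%:R * p) + cnt s) ^+ 2) ->
  Ex p n (ind f) * (n%:R * g ^+ 2) <= 1.
Proof.
move=> hp n0 g0 hf.
have : (n%:R * g) ^+ 2 * Ex p n (ind f) <= n%:R.
  rewrite -Ex_scale.
  apply: (le_trans (@Ex_le p n _ (fun s => (- (n%:R * p) + cnt s) ^+ 2) hp _)).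
    move=> s; rewrite /ind; case: (boolP (f s)) => fs; first by rewrite mulr1 hf.
    by rewrite mulr0 sqr_ge0.
  rewrite Ex_sq addNr expr0n /= add0r.
  have hn : (0 : R) <= n%:R by rewrite ler0n.
  move/andP: hp => [p0 p1]; nra.
have hn : (0 : R) < n%:R by rewrite ltr0n.
move=> H.
have : n%:R * (Ex p n (ind f) * (n%:R * g ^+ 2)) <= n%:R * 1.
  by rewrite mulr1; apply: le_trans H; rewrite exprMn; rewrite le_eqVlt; apply/orP; left; apply/eqP; ring.
by rewrite ler_pM2l.
Qed.

End RealPart.
Arguments Ex {R}.
Arguments cnt {R}.
Arguments ind {R}.
Arguments Ex_le {R}.
Arguments Ex_scale {R}.
Arguments Ex_add {R}.
Arguments Ex_cst {R}.
Arguments Ex_sq {R}.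
Arguments tail_bound {R}.
Local Open Scope classical_set_scope.
Section MeasPart.
Context d (T : measurableType d) (R : realType) (P : probability T R) (A : set T).
Hypothesis mA : measurable A.

Definition S n (f : seq bool -> bool) : set (n.-tuple T) :=
  [set t : n.-tuple T | f (map (fun x => `[< A x >]) t)].

Lemma S_meas n : forall f, measurable (S n f).
Proof.
elim: n => [|n IH] f.
  case E: (f [::]).
    have -> : S 0 f = setT.
      by apply/seteqP; split => // t _; rewrite /S /= (tuple0 t) /= E.
    exact: measurableT.
  have -> : S 0 f = set0.
    by apply/seteqP; split => // t; rewrite /S /= (tuple0 t) /= E.
  exact: measurable0.
have -> : S n.+1 f =
   ((fun t : n.+1.-tuple T => thead t) @^-1` A `&`
     (fun t : n.+1.-tuple T => [tuple of behead t]) @^-1` S n (fun s => f (true :: s)))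
   `|` ((fun t : n.+1.-tuple T => thead t) @^-1` (~` A) `&`
     (fun t : n.+1.-tuple T => [tuple of behead t]) @^-1` S n (fun s => f (false :: s))).
  apply/seteqP; split => t; rewrite /S /=.
    rewrite [in X in X -> _](tuple_eta t) /=.
    case: (pselect (A (thead t))) => Ht.
      by rewrite asboolT // => ?; left.
    by rewrite asboolF // => ?; right.
  rewrite [in X in _ -> X](tuple_eta t) /=.
  by case=> -[Ht H]; [rewrite asboolT | rewrite asboolF].
have mh : measurable_fun setT (fun t : n.+1.-tuple T => thead t) := measurable_tnth ord0.
have mb := @measurable_behead d T n.
apply: measurableU; apply: measurableI.
- by have := mh measurableT A mA; rewrite setTI.
- by have := mb measurableT _ (IH (fun s => f (true :: s))); rewrite setTI.
- by have := mh measurableT _ (measurableC mA); rewrite setTI.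
- by have := mb measurableT _ (IH (fun s => f (false :: s))); rewrite setTI.
Qed.


Lemma Ex_ind_ge0 (p : R) n f : 0 <= p <= 1 -> 0 <= Ex p n (ind f).
Proof.
move=> hp; rewrite -(Ex_cst p n 0); apply: Ex_le => // s.
by rewrite /ind; case: (f s).
Qed.

Lemma PA_fin : P A = (fine (P A))%:E.
Proof. by rewrite fineK // fin_num_measure. Qed.

Lemma p_01 : 0 <= fine (P A) <= 1.
Proof.
have h0 : (0 <= P A)%E by apply: measure_ge0.
have h1 : (P A <= 1)%E by apply: probability_le1.
rewrite PA_fin !lee_fin in h0 h1; by rewrite h0 h1.
Qed.

Lemma mif (c1 c2 : R) : measurable_fun [set: T] (fun x : T => ((if `[< A x >] then c1 else c2)%:E : \bar R)).
Proof.
have -> : (fun x => (if `[< A x >] then c1 else c2)%:E) =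
  EFin \o (fun x => c1 * \1_A x + c2 * \1_(~` A) x).
  apply: funext => x /=; rewrite !indicE.
  case: (pselect (A x)) => Ax.
    by rewrite asboolT // mem_set // memNset ?mulr1 ?mulr0 ?addr0 //= => /(_ Ax).
  by rewrite asboolF // memNset // mem_set // mulr1 mulr0 add0r.
apply/measurable_EFinP; apply: measurable_funD; apply: measurable_funM;
  try exact: measurable_cst.
- exact: measurable_indic.
- exact: measurable_indic (measurableC mA).
Qed.

Lemma pow_S n : forall f, pow_measure P (S n f) = (Ex (fine (P A)) n (ind f))%:E.
Proof.
elim: n => [|n IH] f.
  by rewrite /= /S /ind /= asboolb; case: (f [::]).
set p := fine (P A).
set c1 := Ex p n (ind (fun s => f (true :: s))).
set c2 := Ex p n (ind (fun s => f (false :: s))).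
rewrite /=.
transitivity (\int[P]_x ((if `[< A x >] then c1 else c2)%:E))%E.
  apply: eq_integral => x _.
  have -> : [set t : n.-tuple T | S n.+1 f [tuple of x :: t]] = S n (fun s => f (`[< A x >] :: s)) by [].
  by rewrite IH /c1 /c2; case: (`[< A x >]).
have c10 : 0 <= c1 by apply: Ex_ind_ge0; exact: p_01.
have c20 : 0 <= c2 by apply: Ex_ind_ge0; exact: p_01.
rewrite -(setUv A) ge0_integral_setU //; first last.
- by apply/disj_setPS; rewrite setICr.
- by move=> x _; case: (`[< A x >]); rewrite lee_fin.
- by rewrite setUv; exact: mif.
- exact: measurableC.
rewrite (@eq_integral _ _ _ _ _ (cst c1%:E)); last first.
  by move=> x; rewrite inE => Ax; rewrite asboolT.
rewrite (@eq_integral _ _ _ _ (~` A) (cst c2%:E)); last first.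
  by move=> x; rewrite inE => Ax; rewrite asboolF.
rewrite !integral_cst //; last exact: measurableC.
have hA : (P : {measure set T -> \bar R}) A = p%:E by exact: PA_fin.
have hC : (P : {measure set T -> \bar R}) (~` A) = (1 - p%:E)%E.
  by rewrite -PA_fin; apply: probability_setC.
rewrite hC hA -EFinB -!EFinM -EFinD; congr (_%:E).
rewrite /c1 /c2 /ind /=; ring.
Qed.

End MeasPart.

Lemma key d (T : measurableType d) (R : realType) (P Q : probability T R) (delta : R) (A : set T) :
  1 / 2 < delta < 1 -> Tbar P delta = Tbar Q delta -> measurable A ->
  fine (P A) < fine (Q A) -> False.
Proof.
move=> /andP[d1 d2] HT mA lt12.
set p1 := fine (P A) in lt12; set p2 := fine (Q A) in lt12.
have hp1 : 0 <= p1 <= 1 by exact: p_01.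
have hp2 : 0 <= p2 <= 1 by exact: p_01.
set g := (p2 - p1) / 2.
have g0 : 0 < g by rewrite /g; lra.
set eps := 1 - delta.
have e0 : 0 < eps by rewrite /eps; lra.
have b0 : 0 <= 1 / (g ^+ 2 * eps).
  by rewrite divr_ge0 // mulr_ge0 // ?sqr_ge0 // ltW.
set n := (Num.Def.archi_bound (1 / (g ^+ 2 * eps))).+1.
have hn : 1 / (g ^+ 2 * eps) < n%:R.
  apply: (lt_le_trans (archi_boundP b0)); rewrite ler_nat /n; exact: leqnSn.
have n0 : (0 < n)%N by [].
have nR : (0 : R) < n%:R by rewrite ltr0n.
have key1 : 1 < n%:R * g ^+ 2 * eps.
  have ge : 0 < g ^+ 2 * eps by rewrite mulr_gt0 // exprn_gt0.
  move: hn; rewrite ltr_pdivrMr //; lra.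
set m := (p1 + p2) / 2.
set f := fun s : seq bool => n%:R * m <= cnt (R:=R) s.
have X1 := tail_bound p1 n g f hp1 n0 g0.
have Y2 := tail_bound p2 n g (fun s => ~~ f s) hp2 n0 g0.
have B1 : Ex p1 n (ind f) * (n%:R * g ^+ 2) <= 1.
  apply: X1 => s; rewrite /f => H.
  have h1 : n%:R * g <= - (n%:R * p1) + cnt s.
    by move: H; rewrite /m /g; lra.
  have h2 : 0 <= n%:R * g by rewrite mulr_ge0 // ?ler0n // ltW.
  nra.
have B2 : Ex p2 n (ind (fun s => ~~ f s)) * (n%:R * g ^+ 2) <= 1.
  apply: Y2 => s; rewrite /f => H.
  have H' : cnt s < n%:R * m by rewrite ltNge.
  have h1 : n%:R * g <= (n%:R * p2) - cnt s.
    by move: H'; rewrite /m /g; lra.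
  have h2 : 0 <= n%:R * g by rewrite mulr_ge0 // ?ler0n // ltW.
  nra.
have sum1 : Ex p2 n (ind f) + Ex p2 n (ind (fun s => ~~ f s)) = 1.
  rewrite -Ex_add -(Ex_cst p2 n 1); congr Ex; apply: funext => s.
  by rewrite /ind /=; case: (f s); rewrite /= ?addr0 ?add0r.
have ng : 0 < n%:R * g ^+ 2 by rewrite mulr_gt0 // exprn_gt0.
have lt1 : Ex p1 n (ind f) < delta.
  have : Ex p1 n (ind f) * (n%:R * g ^+ 2) < eps * (n%:R * g ^+ 2).
    apply: (le_lt_trans B1); move: key1; rewrite /eps; nra.
  rewrite ltr_pM2r // /eps; lra.
have ge2 : delta <= Ex p2 n (ind f).
  have : Ex p2 n (ind (fun s => ~~ f s)) * (n%:R * g ^+ 2) < eps * (n%:R * g ^+ 2).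
    apply: (le_lt_trans B2); move: key1; rewrite /eps; nra.
  rewrite ltr_pM2r // /eps; lra.
pose E : ext_event T := existT _ n (@S _ T A n f).
have EQ : Pbar Q E = (Ex p2 n (ind f))%:E by exact: pow_S.
have EP : Pbar P E = (Ex p1 n (ind f))%:E by exact: pow_S.
have HQ : Tbar Q delta E.
  split; first by split => //; exact: S_meas.
  by rewrite EQ lee_fin.
rewrite -HT in HQ.
case: HQ => _; rewrite EP lee_fin => /(lt_le_trans lt1).
by rewrite ltxx.
Qed.

Theorem mainTheorem8 (d : measure_display) (T : measurableType d) (R : realType)
  (P1 P2 : probability T R) (delta : R) :
  1 / 2 < delta < 1 ->
  Tbar P1 delta = Tbar P2 delta ->
  forall A : set T, measurable A -> P1 A = P2 A.
Proof.
move=> hd HT A mA.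
have h1 : P1 A = (fine (P1 A))%:E by exact: PA_fin.
have h2 : P2 A = (fine (P2 A))%:E by exact: PA_fin.
rewrite h1 h2; congr (_%:E).
case: (ltgtP (fine (P1 A)) (fine (P2 A))) => // H.
- by case: (@key _ _ _ _ _ _ _ hd HT mA H).
- by case: (@key _ _ _ _ _ _ _ hd (esym HT) mA H).
Qed.
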